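(* Let $X$ be a finite set with $|X|\ge 3$, let $T\in B(X)$, and let $\mathcal T\subseteq\binom{X}{2}$ be a triplet cover for $T$. Then $|\mathcal T|\ge 2|X|-3$. Moreover this bound is tight: for every $T\in B(X)$ there exists a triplet cover for $T$ of cardinality exactly $2|X|-3$.
   Context: A binary phylogenetic $X$-tree is an unrooted tree $T=(V,E)$ whose leaf set is $X$ and in which every non-leaf vertex is unlabelled and has degree three; $B(X)$ is the set of such trees. Let $\mathring V$ denote the set of interior vertices of $T$. Elements of $\binom{X}{2}$ are written $ab$, triples in $\binom{X}{3}$ are written $abc$. Given $\mathcal T\subseteq\binom{X}{2}$, a triple $abc$ supports $v\in\mathring V$ (relative to $\mathcal T$) if $a,b,c$ lie one in each of the three connected components of $T$ with $v$ and its incident edges removed, and $ab,ac,bc\in\mathcal T$. $\mathcal T$ is a triplet cover for $T$ if every $v\in\mathring V$ is supported by some triple. *)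

(* Defs.v *)
From mathcomp Require Import all_boot.
Set Implicit Arguments. Unset Strict Implicit. Unset Printing Implicit Defensive.

Definition simple_graph (V : finType) (e : rel V) : Prop :=
  symmetric e /\ irreflexive e.

Definition degree (V : finType) (e : rel V) (v : V) : nat := #|[set w | e v w]|.

Definition acyclic (V : finType) (e : rel V) : Prop :=
  forall p : seq V, 3 <= size p -> uniq p -> ~~ cycle e p.

Definition connected (V : finType) (e : rel V) : Prop :=
  forall x y : V, connect e x y.

Definition is_tree (V : finType) (e : rel V) : Prop :=
  simple_graph e /\ connected e /\ acyclic e.

(* T = (V, e) with leaf labelling l : X -> V is a binary phylogenetic X-tree:
   a tree whose leaves (degree-1 vertices) are exactly the (injective) image of X,
   and whose non-leaf vertices all have degree 3. *)
Definition binary_phylo (X V : finType) (e : rel V) (l : X -> V) : Prop :=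
  [/\ is_tree e, injective l,
      (forall v : V, degree e v = 1 <-> exists x, l x = v) &
      (forall v : V, (forall x, l x != v) -> degree e v = 3)].

Definition interior (X V : finType) (l : X -> V) (v : V) : Prop :=
  forall x, l x != v.

Definition remove_vertex (V : finType) (e : rel V) (v : V) : rel V :=
  fun x y => [&& e x y, x != v & y != v].

Definition pair_set (X : finType) (TT : {set {set X}}) : Prop :=
  forall A, A \in TT -> #|A| = 2.

Definition supports (X V : finType) (e : rel V) (l : X -> V)
    (TT : {set {set X}}) (a b c : X) (v : V) : Prop :=
  [/\ [/\ l a != v, l b != v & l c != v],
      [/\ ~~ connect (remove_vertex e v) (l a) (l b),
          ~~ connect (remove_vertex e v) (l a) (l c) &
          ~~ connect (remove_vertex e v) (l b) (l c)] &
      [/\ [set a; b] \in TT, [set a; c] \in TT & [set b; c] \in TT]].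

Definition triplet_cover (X V : finType) (e : rel V) (l : X -> V)
    (TT : {set {set X}}) : Prop :=
  pair_set TT /\
  forall v : V, interior l v -> exists a b c : X, supports e l TT a b c v.

(* Main.v *)
Require Import Defs.
From mathcomp Require Import all_boot.
From mathcomp Require Import zify.
Set Implicit Arguments. Unset Strict Implicit. Unset Printing Implicit Defensive.

Section Paths.
Variable V : finType.
Variable e : rel V.
Hypothesis esym : symmetric e.
Hypothesis eirr : irreflexive e.
Hypothesis eacyc : acyclic e.

Lemma upath (r : rel V) x y : connect r x y ->
  exists p, [/\ path r x p, uniq (x :: p) & last x p = y].
Proof.
move/connectP=> [p Hp ->]; case: (shortenP Hp) => p' Hp' Hu _.
by exists p'.
Qed.

Lemma cyc_pred s : forall x y z, path e x (rcons s y) -> uniq (x :: rcons s y) ->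
  z \in x :: rcons s y -> e y z -> z = last x s.
Proof.
elim: s => [|a s IH] x y z /=.
  rewrite andbT !inE => _ _ /orP[/eqP->|/eqP->] //.
  by rewrite eirr.
move=> /andP[exa Hp] /andP[Hx Hu]; rewrite inE => /orP[/eqP->|Hz] Hyz.
  exfalso; have := eacyc (p := x :: a :: rcons s y).
  rewrite /= size_rcons => /(_ isT); rewrite Hx Hu => /(_ isT).
  by rewrite exa rcons_path Hp last_rcons Hyz.
exact: IH Hp Hu Hz Hyz.
Qed.

Lemma split_mid (r : rel V) p : forall u z, path r u p -> uniq (u :: p) ->
  z \in p -> z != last u p -> exists a b, [/\ a != b, r a z & r z b].
Proof.
elim: p => [|c p IH] u z //= /andP[ruc Hp] /andP[Hu Hu2].
rewrite inE => /orP[/eqP Ezc|Hz] Hl.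
  subst z; case: p Hp Hu Hl {Hu2 IH} => [|b p] /=; first by rewrite eqxx.
  move=> /andP[rcb _]; rewrite !inE negb_or => /andP[_ /norP[Hub _]] _.
  by exists u, b.
exact: IH Hp Hu2 Hz Hl.
Qed.

Lemma ext_path (r : rel V) x : forall s0, path r x s0 -> uniq (x :: s0) ->
  exists q, [/\ path r x (s0 ++ q), uniq (x :: s0 ++ q) &
     forall z, r (last x (s0 ++ q)) z -> z \in x :: s0 ++ q].
Proof.
move=> s0; move Hn: (#|V| - size s0) => n.
elim: n s0 Hn => [|n IH] s0 Hn Hp Hu.
  case: (boolP [exists z, r (last x s0) z && (z \notin x :: s0)]).
    case/existsP=> z /andP[rz zn].
    have Hu' : uniq (x :: rcons s0 z) by rewrite -rcons_cons rcons_uniq zn Hu.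
    have := card_uniqP Hu'; rewrite /= size_rcons => Hc.
    have := max_card (mem (x :: rcons s0 z)); rewrite Hc.
    move=> H2; lia.
  rewrite negb_exists => /forallP H; exists [::]; rewrite cats0; split=> // z rz.
  by move: (H z); rewrite rz /= negbK.
case: (boolP [exists z, r (last x s0) z && (z \notin x :: s0)]).
  case/existsP=> z /andP[rz zn].
  have Hu' : uniq (x :: rcons s0 z) by rewrite -rcons_cons rcons_uniq zn Hu.
  have Hp' : path r x (rcons s0 z) by rewrite rcons_path Hp rz.
  have Hn' : #|V| - size (rcons s0 z) = n.
    by rewrite size_rcons subnS Hn.
  case: (IH _ Hn' Hp' Hu') => q [H1 H2 H3]; exists (z :: q).
  by rewrite -cat_rcons.
rewrite negb_exists => /forallP H; exists [::]; rewrite cats0; split=> // z rz.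
by move: (H z); rewrite rz /= negbK.
Qed.

End Paths.

Section Tree.
Variables (X V : finType) (e : rel V) (l : X -> V).
Hypothesis esym : symmetric e.
Hypothesis eirr : irreflexive e.
Hypothesis econn : connected e.
Hypothesis eacyc : acyclic e.
Hypothesis linj : injective l.
Hypothesis hdeg1 : forall v, degree e v = 1 <-> exists x, l x = v.
Hypothesis hdeg3 : forall v, (forall x, l x != v) -> degree e v = 3.
Hypothesis hX : 3 <= #|X|.

Definition nbrs v := [set w | e v w].
Definition leafv z := [exists x, l x == z].
Definition Int := [set v | ~~ leafv v].
Definition RA (A : {set V}) : rel V := fun x y => [&& e x y, x \notin A & y \notin A].
Definition restr (A : {set V}) : rel V := fun x y => [&& e x y, x \in A & y \in A].
Definition Aconn (A : {set V}) := forall u w, u \in A -> w \in A -> connect (restr A) u w.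
Notation rv v := (remove_vertex e v).

Lemma leafvP z : reflect (exists x, l x = z) (leafv z).
Proof. by apply: (iffP existsP) => [[x /eqP]|[x <-]]; exists x. Qed.

Lemma IntP v : (v \in Int) = [forall x, l x != v].
Proof. by rewrite inE negb_exists. Qed.

Lemma l_notInt x : l x \notin Int.
Proof. by rewrite inE negbK; apply/leafvP; exists x. Qed.

Lemma Int_neq v x : v \in Int -> l x != v.
Proof. by move=> Hv; apply/eqP=> E; move: (l_notInt x); rewrite E Hv. Qed.

Lemma Int_deg3 v : v \in Int -> #|nbrs v| = 3.
Proof. by rewrite IntP => /forallP H; apply: hdeg3. Qed.

Lemma leaf_deg1 v : leafv v -> #|nbrs v| = 1.
Proof. by move/leafvP/hdeg1. Qed.

Lemma two_nbrs_int z a b : a != b -> e z a -> e z b -> z \in Int.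
Proof.
move=> ab za zb; rewrite inE; apply/negP=> /leaf_deg1 H.
have : [set a; b] \subset nbrs z by apply/subsetP=> w; rewrite !inE => /orP[]/eqP->.
by move/subset_leq_card; rewrite cards2 ab H.
Qed.

Lemma three_nb v n : v \in Int -> e v n -> exists m1 m2,
  [/\ m1 != m2, m1 != n, m2 != n, e v m1 & [/\ e v m2 &
     forall w, e v w -> [\/ w = n, w = m1 | w = m2]]].
Proof.
move=> /Int_deg3 H3 vn.
have Hn : n \in nbrs v by rewrite inE.
move: H3; rewrite (cardsD1 n) Hn => [[]] /eqP/cards2P [m1 [m2 [H12 E]]].
have : m1 \in nbrs v :\ n by rewrite E !inE eqxx.
have : m2 \in nbrs v :\ n by rewrite E !inE eqxx orbT.
rewrite !inE => /andP[m2n vm2] /andP[m1n vm1].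
exists m1, m2; split=> //; split=> // w vw.
case: (eqVneq w n) => [->|wn]; first by constructor 1.
have : w \in nbrs v :\ n by rewrite !inE wn.
by rewrite E !inE => /orP[]/eqP->; [constructor 2|constructor 3].
Qed.

Lemma rv_sub v : subrel (rv v) e.
Proof. by move=> x y /andP[]. Qed.

Lemma rv_sym v : connect_sym (rv v).
Proof.
apply: sym_connect_sym => x y; rewrite /remove_vertex esym.
by case: (e y x); rewrite //= andbC.
Qed.

Lemma RA_sym (A : {set V}) : connect_sym (RA A).
Proof.
apply: sym_connect_sym => x y; rewrite /RA esym.
by case: (e y x); rewrite //= andbC.
Qed.

Lemma rv_RA v : connect (rv v) =2 connect (RA [set v]).
Proof. by apply: eq_connect => x y; rewrite /RA /remove_vertex !inE. Qed.

Lemma RA_mono (A B : {set V}) : B \subset A -> forall x y, connect (RA A) x y -> connect (RA B) x y.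
Proof.
move=> /subsetP sBA x y /connectP [p Hp ->]; apply/connectP; exists p => //.
apply: sub_path Hp => a b /and3P[ab Ha Hb]; rewrite /RA ab.
by rewrite (contra (sBA a) Ha) (contra (sBA b) Hb).
Qed.

Lemma RA_rv (A : {set V}) v : v \in A -> forall x y, connect (RA A) x y -> connect (rv v) x y.
Proof.
move=> vA x y H; rewrite rv_RA; apply: RA_mono H.
by rewrite sub1set.
Qed.

Lemma closed_connect (r : rel V) (S : pred V) x z :
  (forall a b, S a -> r a b -> S b) -> S x -> connect r x z -> S z.
Proof.
move=> HS Sx /connectP [p Hp ->]; elim: p x Sx Hp => //= a p IH x Sx /andP[xa Hp].
exact: IH (HS _ _ Sx xa) Hp.
Qed.

Lemma connect_sub_from (r1 r2 : rel V) a z :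
  (forall x y, connect r1 a x -> r1 x y -> r2 x y) -> connect r1 a z -> connect r2 a z.
Proof.
move=> H /connectP [p Hp ->].
suff: forall x, connect r1 a x -> connect r2 a x -> path r1 x p -> connect r2 a (last x p).
  by apply; rewrite ?connect0.
elim: p {Hp} => //= b p IH x c1 c2 /andP[xb Hp]; apply: IH Hp.
  exact: connect_trans c1 (connect1 xb).
exact: connect_trans c2 (connect1 (H _ _ c1 xb)).
Qed.

Lemma rv_path_neq v x p : path (rv v) x p -> all (fun y => y != v) p.
Proof.
by elim: p x => //= a p IH x /andP[/and3P[_ _ av] Hp]; rewrite av (IH a).
Qed.

Lemma path_to_rv v x p : x != v -> all (fun y => y != v) p -> path e x p -> path (rv v) x p.
Proof.
move=> xv Hall; apply: (sub_in_path (P := fun y => y != v)).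
  by move=> a b Ha Hb ab; rewrite /remove_vertex ab; rewrite !unfold_in in Ha Hb; rewrite Ha Hb.
by rewrite /= xv.
Qed.

Lemma last_step (r : rel V) u p v : subrel r e -> path r u (rcons p v) ->
  uniq (u :: rcons p v) -> connect (rv v) u (last u p) /\ r (last u p) v.
Proof.
move=> sre; rewrite rcons_path -rcons_cons rcons_uniq => /andP[Hp Hl] /andP[vn _].
split=> //; apply: (path_connect (p := p)); last exact: mem_last.
apply: path_to_rv; first by apply: contraNneq vn => ->; rewrite mem_head.
  by apply/allP=> y yp; apply: contraNneq vn => <-; rewrite inE yp orbT.
exact: sub_path Hp.
Qed.

Lemma side_of z v : z != v -> exists2 n, e v n & connect (rv v) n z.
Proof.
move=> zv; have [p [Hp Hu Hl]] := upath (econn z v).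
case/lastP: p Hp Hu Hl => [|p y] Hp Hu Hl; first by move: zv; rewrite -Hl /= eqxx.
rewrite last_rcons in Hl; subst y.
have [H1 H2] := last_step (fun _ _ h => h) Hp Hu.
by exists (last z p); [rewrite esym | rewrite rv_sym].
Qed.

Lemma sides_disj v n1 n2 : e v n1 -> e v n2 -> n1 != n2 -> ~~ connect (rv v) n1 n2.
Proof.
move=> v1 v2 n12; apply/negP=> /upath [p [Hp Hu Hl]].
case/lastP: p Hp Hu Hl => [|p y] Hp Hu Hl; first by move: n12; rewrite -Hl /= eqxx.
rewrite last_rcons in Hl; subst y.
have Hall := rv_path_neq Hp.
have n1v : n1 != v by apply: contraTneq v1 => ->; rewrite eirr.
have Hv : v \notin n1 :: rcons p n2.
  rewrite inE negb_or eq_sym n1v /=; apply/negP => /(allP Hall); by rewrite eqxx.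
have := @cyc_pred _ _ eirr eacyc (n1 :: p) v n2 v.
rewrite /= v1 (sub_path (@rv_sub v) Hp) Hv -[[&& _, _ & _]]/(uniq (n1 :: rcons p n2)) Hu mem_head esym v2 => /(_ isT isT isT isT) E.
have H := mem_last n1 p; rewrite -E in H.
by move: Hv; rewrite -rcons_cons mem_rcons inE H orbT.
Qed.

Lemma leaf_in_side v n : e v n -> exists x, connect (rv v) n (l x).
Proof.
move=> vn.
have [q [Hp Hu Hn]] := @ext_path _ (rv v) n [::] isT isT.
rewrite /= in Hp Hu Hn.
have n1v : n != v by apply: contraTneq vn => ->; rewrite eirr.
have Hall := rv_path_neq Hp.
have yv : last n q != v.
  have := mem_last n q; rewrite inE => /orP[/eqP->//|/(allP Hall)//].
suff /leafvP [x Ex] : leafv (last n q).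
  by exists x; rewrite Ex; apply: (path_connect Hp); exact: mem_last.
case: (boolP (leafv (last n q))) => // Hy.
have Hint : last n q \in Int by rewrite inE.
move: (Int_deg3 Hint); clear Hint Hy.
have Hsub : exists w, nbrs (last n q) \subset [set v; w].
  case/lastP: q Hp Hu Hn Hall yv => [|q y'] Hp Hu Hn Hall yv.
    exists v; apply/subsetP => w; rewrite !inE => yw.
    case: (eqVneq w v) => // wv; have := Hn w.
    rewrite /= /remove_vertex yw wv yv inE => /(_ isT) /eqP E.
    by move: yw; rewrite E eirr.
  exists (last n q); apply/subsetP => w; rewrite !inE => yw.
  case: (eqVneq w v) => //= wv; apply/eqP.
  have := Hn w; rewrite /remove_vertex yw wv yv => /(_ isT) Hw.
  rewrite last_rcons in yw.
  exact: (cyc_pred eirr eacyc (sub_path (@rv_sub v) Hp) (Hu : uniq (n :: rcons q y')) Hw yw).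
case: Hsub => w /subset_leq_card; rewrite cards2 => H H3.
by move: H; rewrite H3; case: (v != w).
Qed.

Lemma Aleaf (A : {set V}) : 1 < #|A| -> Aconn A ->
  exists v n3, [/\ v \in A, n3 \in A, e v n3 & forall u, u \in A -> e v u -> u = n3].
Proof.
move=> /card_gt1P [x [y [xA yA xy]]] HA.
have /connectP [p Hp Hl] := HA x y xA yA.
case: p Hp Hl => [|x1 p] /=; first by move=> _ E; move: xy; rewrite E eqxx.
move=> /andP[rx1 _] _.
have Hx1 : x != x1 by apply: contraTneq rx1 => ->; rewrite /restr eirr.
have P1 : path (restr A) x [:: x1] by rewrite /= rx1.
have U1 : uniq [:: x; x1] by rewrite /= inE Hx1.
have [q [Hp Hu Hn]] := @ext_path _ (restr A) x [:: x1] P1 U1.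
move: Hp Hu Hn; rewrite cat1s [x1 :: q]lastI => Hp Hu Hn.
rewrite last_rcons in Hn.
have sre : subrel (restr A) e by move=> a b /and3P[].
move: (Hp); rewrite rcons_path => /andP[_ /and3P[ey nA yA']].
exists (last x1 q), (last x (belast x1 q)); split=> //; first by rewrite esym.
move=> u uA yu.
have ru : restr A (last x1 q) u by rewrite /restr yu uA yA'.
exact: (cyc_pred eirr eacyc (sub_path sre Hp) Hu (Hn u ru) yu).
Qed.

Lemma Aconn_del (A : {set V}) v n3 : Aconn A -> v \in A ->
  (forall u, u \in A -> e v u -> u = n3) -> Aconn (A :\ v).
Proof.
move=> HA vA Hv u w; rewrite !inE => /andP[uv uA] /andP[wv wA].
have [p [Hp Hu Hl]] := upath (HA u w uA wA).
case: (boolP (v \in p)) => vp.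
  have : v != last u p by rewrite Hl eq_sym.
  case/(split_mid Hp Hu vp) => a [b [ab /and3P[av aA _] /and3P[vb _ bA]]].
  have va : e v a by rewrite esym.
  by move: ab; rewrite (Hv a aA va) (Hv b bA vb) eqxx.
apply/connectP; exists p => //.
apply: (sub_in_path (P := fun y => y != v)); last exact: Hp.
  move=> a b Ha Hb /and3P[ab aA bA]; rewrite !unfold_in in Ha Hb.
  by rewrite /restr ab !inE Ha Hb aA bA.
rewrite /= uv; apply/allP => y yp; by apply: contraNneq vp => <-.
Qed.
Lemma Int_conn : Aconn Int.
Proof.
move=> u w uI wI; have [p [Hp Hu Hl]] := upath (econn u w).
have Hall : all (mem Int) (u :: p).
  rewrite /= uI; apply/allP => z zp.
  case: (eqVneq z (last u p)) => [->|zl]; first by rewrite Hl.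
  have [a [b [ab az zb]]] := split_mid Hp Hu zp zl.
  by apply: (two_nbrs_int ab); rewrite // esym.
apply/connectP; exists p => //.
apply: (sub_in_path (P := mem Int)) Hall Hp.
by move=> a b Ha Hb ab; rewrite /restr ab Ha Hb.
Qed.

Lemma no_side_A (A : {set V}) v n3 n : Aconn A -> v \in A -> e v n3 ->
  (forall u, u \in A -> e v u -> u = n3) -> e v n -> n != n3 ->
  forall u, u \in A -> u != v -> ~~ connect (rv v) n u.
Proof.
move=> HA vA vn3 Hv vn nn3 u uA uv; apply/negP => Hnu.
have [p [Hp Hu Hl]] := upath (HA u v uA vA).
case/lastP: p Hp Hu Hl => [|p y] Hp Hu Hl; first by move: uv; rewrite -Hl /= eqxx.
rewrite last_rcons in Hl; subst y.
have sre : subrel (restr A) e by move=> a b /and3P[].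
have [H1 /and3P[H2 H3 _]] := last_step sre Hp Hu.
rewrite esym in H2; rewrite (Hv _ H3 H2) in H1.
by have := sides_disj vn vn3 nn3; rewrite (connect_trans Hnu H1).
Qed.

Lemma side_transfer (A : {set V}) v n : v \in A ->
  (forall u, u \in A -> u != v -> ~~ connect (rv v) n u) ->
  forall z, connect (rv v) n z -> connect (RA A) n z.
Proof.
move=> vA H z; apply: connect_sub_from => x y cx /and3P[xy xv yv].
have cy : connect (rv v) n y by apply: connect_trans cx (connect1 _); rewrite /remove_vertex xy xv yv.
rewrite /RA xy.
case: (boolP (x \in A)) => xA; first by move: (H x xA xv); rewrite cx.
case: (boolP (y \in A)) => yA //; by move: (H y yA yv); rewrite cy.
Qed.

Lemma leafside_A (A : {set V}) v n : v \in A -> e v n ->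
  (forall u, u \in A -> u != v -> ~~ connect (rv v) n u) ->
  exists x, connect (RA A) n (l x).
Proof.
move=> vA vn H; have [x Hx] := leaf_in_side vn.
by exists x; apply: side_transfer Hx.
Qed.

Lemma noedge_leaves a b : leafv a -> leafv b -> ~~ e a b.
Proof.
move=> la lb; apply/negP => ab.
have one : forall z w, leafv z -> e z w -> forall w', e z w' -> w' = w.
  move=> z w lz zw w' zw'; apply/eqP; apply: contraT => ww.
  have : [set w; w'] \subset nbrs z by apply/subsetP=> t; rewrite !inE => /orP[]/eqP->.
  by move/subset_leq_card; rewrite cards2 eq_sym ww (leaf_deg1 lz).
have Hall : forall z, z \in [set a; b].
  move=> z; apply: (closed_connect (S := mem [set a; b])) (econn a z); last by rewrite !inE eqxx.
  move=> x y; rewrite !inE => /orP[]/eqP-> Hy.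
    by rewrite (one _ _ la ab _ Hy) eqxx orbT.
  have ba : e b a by rewrite esym.
  by rewrite (one _ _ lb ba _ Hy) eqxx.
have : [set l x | x in X] \subset [set a; b] by apply/subsetP => z _; exact: Hall.
move/subset_leq_card; rewrite card_imset // cards2 => H.
have H3 : (a != b).+1 <= 2 by case: (a != b).
by move: (leq_trans H H3); rewrite leqNgt hX.
Qed.

Lemma exists_int : exists w, w \in Int.
Proof.
have [x _] : exists x : X, x \in X by apply/card_gt0P; apply: leq_trans hX.
have : 0 < #|nbrs (l x)|.
  by rewrite (leaf_deg1 (introT (leafvP _) (ex_intro _ x erefl))).
case/card_gt0P => w; rewrite inE => xw.
exists w; rewrite inE; apply/negP => lw.
have lx : leafv (l x) by apply/leafvP; exists x.
by move: (noedge_leaves lx lw); rewrite xw.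
Qed.

Definition blk (A : {set V}) x := [set y | connect (RA A) (l x) (l y)].
Definition PP (A : {set V}) := [set blk A x | x : X].
Definition qe (A : {set V}) (S : {set X}) := [set blk A x | x in S].
Definition EE (A : {set V}) (TT : {set {set X}}) := [set qe A S | S in TT & #|qe A S| == 2].
Definition Kset (A : {set V}) n := [set y | connect (RA A) n (l y)].

Lemma blk_Int x : blk Int x = [set x].
Proof.
apply/setP => y; rewrite !inE; apply/idP/idP; last by move/eqP->; exact: connect0.
move=> H; apply/eqP; apply: linj; apply/eqP.
apply: (closed_connect (S := pred1 (l x)) _ _ H) => //= a b /eqP-> /and3P[ab Ha Hb].
exfalso; move: Ha Hb; rewrite !inE !negbK => Ha Hb.
by move: (noedge_leaves Ha Hb); rewrite ab.
Qed.

Lemma isolated (A : {set V}) v z : v \in A -> connect (RA A) z v -> z = v.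
Proof.
move=> vA; rewrite RA_sym => H; apply/eqP.
apply: (closed_connect (S := pred1 v) _ _ H) => //= a b /eqP-> /and3P[_ Ha _].
by move: Ha; rewrite vA.
Qed.

Lemma in_blk (A : {set V}) x : x \in blk A x.
Proof. by rewrite inE connect0. Qed.

Lemma blk_K (A : {set V}) n x : connect (RA A) n (l x) -> blk A x = Kset A n.
Proof.
move=> H; apply/setP => y; rewrite !inE.
by rewrite (same_connect (@RA_sym A) H).
Qed.

Lemma blkK_eq (A : {set V}) n x : (blk A x == Kset A n) = connect (RA A) n (l x).
Proof.
apply/idP/idP => [/eqP E|/blk_K ->//].
by have := in_blk A x; rewrite E inE.
Qed.

Lemma Kdist (A : {set V}) v n n' x : v \in A -> e v n -> e v n' -> n != n' ->
  x \in Kset A n -> Kset A n != Kset A n'.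
Proof.
move=> vA vn vn' nn' Hx; apply/eqP => E; move: (Hx); rewrite E inE => Hx'.
rewrite inE in Hx; rewrite RA_sym in Hx'.
by have := sides_disj vn vn' nn'; rewrite (RA_rv vA (connect_trans Hx Hx')).
Qed.

Lemma blk_dist (A : {set V}) v a b : v \in A -> ~~ connect (rv v) (l a) (l b) -> blk A a != blk A b.
Proof.
move=> vA H; apply/eqP => E; have := in_blk A b; rewrite -E inE => Hab.
by move: H; rewrite (RA_rv vA Hab).
Qed.

Lemma qe2 A a b : qe A [set a; b] = [set blk A a; blk A b].
Proof. by rewrite /qe imsetU1 imset_set1. Qed.

Lemma card3 (T : finType) (a b c : T) : a != b -> a != c -> b != c -> #|[set a; b; c]| = 3.
Proof.
move=> ab ac bc; rewrite -setUA cardsU1 cards2 bc !inE negb_or ab ac.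
by [].
Qed.

Lemma strict_imset (aT rT : finType) (f : aT -> rT) (D : {set aT}) x y :
  x \in D -> y \in D -> x != y -> f x = f y -> #|f @: D| < #|D|.
Proof.
move=> xD yD xy fxy; rewrite ltn_neqAle leq_imset_card andbT.
by apply/negP => /imset_injP inj; move: xy; rewrite (inj x y xD yD fxy) eqxx.
Qed.

Section Step.
Variables (A : {set V}) (v n1 n2 n3 : V).
Hypothesis HA : Aconn A.
Hypothesis AI : A \subset Int.
Hypothesis vA : v \in A.
Hypothesis n3A : n3 \in A.
Hypothesis vn3 : e v n3.
Hypothesis Hv : forall u, u \in A -> e v u -> u = n3.
Hypothesis n12 : n1 != n2.
Hypothesis n13 : n1 != n3.
Hypothesis n23 : n2 != n3.
Hypothesis vn1 : e v n1.
Hypothesis vn2 : e v n2.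
Hypothesis Hnb : forall w, e v w -> [\/ w = n3, w = n1 | w = n2].

Let A' := A :\ v.
Let K1 := Kset A n1.
Let K2 := Kset A n2.
Let vI : v \in Int. Proof. exact: (subsetP AI). Qed.

Lemma n1A : n1 \notin A.
Proof. by apply/negP => H; move: n13; rewrite (Hv H vn1) eqxx. Qed.
Lemma n2A : n2 \notin A.
Proof. by apply/negP => H; move: n23; rewrite (Hv H vn2) eqxx. Qed.

Lemma nsA1 : forall u, u \in A -> u != v -> ~~ connect (rv v) n1 u.
Proof. exact: no_side_A HA vA vn3 Hv vn1 n13. Qed.
Lemma nsA2 : forall u, u \in A -> u != v -> ~~ connect (rv v) n2 u.
Proof. exact: no_side_A HA vA vn3 Hv vn2 n23. Qed.

Lemma K1P : K1 \in PP A.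
Proof.
have [x Hx] := leafside_A vA vn1 nsA1.
by apply/imsetP; exists x => //; rewrite (blk_K Hx).
Qed.
Lemma K2P : K2 \in PP A.
Proof.
have [x Hx] := leafside_A vA vn2 nsA2.
by apply/imsetP; exists x => //; rewrite (blk_K Hx).
Qed.
Lemma K12 : K1 != K2.
Proof.
have [x Hx] := leafside_A vA vn1 nsA1.
by apply: (Kdist (x := x)) vA vn1 vn2 n12 _; rewrite inE.
Qed.

Definition Mv z := [|| z == v, connect (RA A) n1 z | connect (RA A) n2 z].

Lemma Mclosed x y : Mv x -> connect (RA A) x y -> Mv y.
Proof.
case/or3P => [/eqP->|H|H] Hy.
- by rewrite RA_sym in Hy; rewrite /Mv (isolated vA Hy) eqxx.
- by rewrite /Mv (connect_trans H Hy) orbT.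
- by rewrite /Mv (connect_trans H Hy) !orbT.
Qed.

Lemma nbr_notA' w : e v w -> w \notin A' -> w = n1 \/ w = n2.
Proof.
move=> vw; rewrite !inE negb_and negbK.
case: (Hnb vw) => [->|->|->]; [|by left|by right].
by rewrite n3A orbF => /eqP E; move: vn3; rewrite -E eirr.
Qed.

Lemma merge z z' : connect (RA A') z z' = connect (RA A) z z' || (Mv z && Mv z').
Proof.
apply/idP/idP.
  move/connectP => [p Hp ->].
  suff : forall x, connect (RA A) z x || (Mv z && Mv x) -> path (RA A') x p ->
    connect (RA A) z (last x p) || (Mv z && Mv (last x p)).
    by apply; rewrite ?connect0.
  elim: p {Hp} => //= y p IH x Rx /andP[/and3P[xy Hx Hy] Hp]; apply: IH Hp.
  case: (eqVneq x v) => [Ex|xv].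
    subst x; have My : Mv y.
      by case: (nbr_notA' xy Hy) => ->; rewrite /Mv connect0 ?orbT.
    case/orP: Rx => [/isolated -> //|/andP[Mz _]]; first by rewrite My /Mv eqxx orbT.
    by rewrite Mz My orbT.
  case: (eqVneq y v) => [Ey|yv].
    subst y; have yx : e v x by rewrite esym.
    have Mx : Mv x by case: (nbr_notA' yx Hx) => ->; rewrite /Mv connect0 ?orbT.
    have Mvv : Mv v by rewrite /Mv eqxx.
    case/orP: Rx => [Hzx|/andP[Mz _]]; last by rewrite Mz Mvv orbT.
    rewrite RA_sym in Hzx; by rewrite (Mclosed Mx Hzx) Mvv orbT.
  have rxy : RA A x y.
    by move: Hx Hy; rewrite !inE xv yv /= => Hx Hy; rewrite /RA xy Hx Hy.
  case/orP: Rx => [Hzx|/andP[Mz Mx]].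
    by rewrite (connect_trans Hzx (connect1 rxy)).
  by rewrite Mz (Mclosed Mx (connect1 rxy)) orbT.
have toV : forall w, Mv w -> connect (RA A') v w.
  move=> w /or3P[/eqP->|H|H]; first exact: connect0.
    apply: connect_trans (RA_mono (subsetDl A [set v]) H).
    by apply: connect1; rewrite /RA vn1 !inE eqxx (negbTE n1A) andbF.
  apply: connect_trans (RA_mono (subsetDl A [set v]) H).
  by apply: connect1; rewrite /RA vn2 !inE eqxx (negbTE n2A) andbF.
case/orP => [H|/andP[Mz Mz']]; first exact: (RA_mono (subsetDl A [set v]) H).
by apply: connect_trans (toV _ Mz'); rewrite RA_sym; apply: toV.
Qed.

Definition phi (B : {set X}) := if (B == K1) || (B == K2) then K1 :|: K2 else B.

Lemma Mv_l x : Mv (l x) = (blk A x == K1) || (blk A x == K2).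
Proof. by rewrite /Mv !blkK_eq (negbTE (Int_neq x vI)). Qed.

Lemma blk_step x : blk A' x = phi (blk A x).
Proof.
have HK : forall y, (y \in K1 :|: K2) = Mv (l y).
  by move=> y; rewrite inE /K1 /K2 !inE /Mv (negbTE (Int_neq y vI)).
apply/setP => y; rewrite /phi -Mv_l inE merge.
case: (boolP (Mv (l x))) => Mx /=.
  rewrite HK; case: (boolP (Mv (l y))) => My; first by rewrite orbT.
  rewrite orbF; apply/negP => H; by move: (Mclosed Mx H); rewrite (negbTE My).
by rewrite orbF inE.
Qed.

Lemma nonK B : B \in PP A -> B != K1 -> B != K2 -> B != K1 :|: K2.
Proof.
case/imsetP => x _ -> H1 H2; apply/eqP => E.
have : x \in K1 :|: K2 by rewrite -E in_blk.
by rewrite inE /K1 /K2 !inE -!blkK_eq (negbTE H1) (negbTE H2).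
Qed.

Lemma PP_step : #|PP A| = #|PP A'| + 1.
Proof.
have -> : PP A' = phi @: PP A.
  rewrite /PP -imset_comp; apply: eq_imset => x; exact: blk_step.
have -> : phi @: PP A = phi @: (PP A :\ K2).
  apply/eqP; rewrite eqEsubset (imsetS _ (subsetDl _ _)) andbT.
  apply/subsetP => B /imsetP [B' HB' ->]; apply/imsetP.
  case: (eqVneq B' K2) => [E|ne]; last by exists B' => //; rewrite !inE ne.
  exists K1; first by rewrite !inE K12 K1P.
  by rewrite /phi E !eqxx orbT.
rewrite card_in_imset.
  by rewrite (cardsD1 K2 (PP A)) K2P addnC.
move=> B B'; rewrite !inE => /andP[b2 bP] /andP[b'2 b'P].
rewrite /phi (negbTE b2) (negbTE b'2) !orbF.
case: (eqVneq B K1) => [->|b1]; case: (eqVneq B' K1) => [->|b'1] //.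
  by move=> E; move: (nonK b'P b'1 b'2); rewrite E eqxx.
by move=> E; move: (nonK bP b1 b2); rewrite E eqxx.
Qed.

Lemma qe_step S : qe A' S = phi @: qe A S.
Proof. by rewrite /qe -imset_comp; apply: eq_imset => x; exact: blk_step. Qed.

Lemma EE_step (TT : {set {set X}}) p q s : pair_set TT ->
  p \in K1 -> q \in K2 -> connect (rv v) n3 (l s) ->
  [set p; q] \in TT -> [set p; s] \in TT -> [set q; s] \in TT ->
  #|EE A' TT| + 2 <= #|EE A TT|.
Proof.
move=> HT pK qK Hs pq ps qs.
have Bp : blk A p = K1 by apply: blk_K; rewrite inE in pK.
have Bq : blk A q = K2 by apply: blk_K; rewrite inE in qK.
set C := blk A s.
have CK : forall n, e v n -> n != n3 -> C != Kset A n.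
  move=> n vn nn3; apply/negP; rewrite blkK_eq => H.
  have := sides_disj vn vn3 nn3; rewrite rv_sym in Hs.
  by rewrite (connect_trans (RA_rv vA H) Hs).
have C1 : C != K1 by apply: CK.
have C2 : C != K2 by apply: CK.
set Q0 := [set K1; K2].
set Q1 := [set K1; C].
set Q2 := [set K2; C].
have inEE : forall a b, [set a; b] \in TT -> blk A a != blk A b ->
    [set blk A a; blk A b] \in EE A TT.
  move=> a b ab nab; apply/imsetP; exists [set a; b]; last by rewrite qe2.
  by rewrite inE ab qe2 cards2 nab.
have Q0E : Q0 \in EE A TT by rewrite /Q0 -Bp -Bq inEE // Bp Bq K12.
have Q1E : Q1 \in EE A TT by rewrite /Q1 -Bp inEE // Bp eq_sym C1.
have Q2E : Q2 \in EE A TT by rewrite /Q2 -Bq inEE // Bq eq_sym C2.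
set D := EE A TT :\ Q0.
have Q1D : Q1 \in D.
  rewrite !inE Q1E andbT; apply/negP => /eqP E.
  have : C \in Q1 by rewrite !inE eqxx orbT.
  by rewrite E !inE (negbTE C1) (negbTE C2).
have Q2D : Q2 \in D.
  rewrite !inE Q2E andbT; apply/negP => /eqP E.
  have : C \in Q2 by rewrite !inE eqxx orbT.
  by rewrite E !inE (negbTE C1) (negbTE C2).
have Q12 : Q1 != Q2.
  apply/negP => /eqP E; have : K1 \in Q1 by rewrite !inE eqxx.
  by rewrite E !inE (negbTE K12) eq_sym (negbTE C1).
have phiC : phi C = C by rewrite /phi (negbTE C1) (negbTE C2).
have PsiQ : [set phi B | B in Q1] = [set phi B | B in Q2].
  by rewrite /Q1 /Q2 !imsetU1 !imset_set1 phiC /phi !eqxx orbT.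
have sub : EE A' TT \subset [set [set phi B | B in (Q : {set {set X}})] | Q in D].
  apply/subsetP => Y /imsetP [S]; rewrite inE => /andP[ST] /eqP H2 ->.
  apply/imsetP; exists (qe A S); last by rewrite qe_step.
  have c2 : #|qe A S| = 2.
    apply/eqP; rewrite eqn_leq; apply/andP; split.
      by rewrite -(HT _ ST) leq_imset_card.
    by rewrite -{1}H2 qe_step leq_imset_card.
  rewrite !inE; apply/andP; split.
    apply/negP => /eqP E; move: H2; rewrite qe_step E /Q0 imsetU1 imset_set1.
    by rewrite /phi !eqxx orbT setUid cards1.
  by apply/imsetP; exists S; rewrite // inE ST c2 eqxx.
have := subset_leq_card sub.
have := @strict_imset _ _ (fun Q : {set {set X}} => [set phi B | B in Q]) D Q1 Q2 Q1D Q2D Q12 PsiQ.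
rewrite [#|EE A TT|](cardsD1 Q0) Q0E -/D /=.
move=> H1 H2; have H3 := leq_ltn_trans H2 H1.
by rewrite addn2 ltnS.
Qed.

Lemma arrange (TT : {set {set X}}) a b c : supports e l TT a b c v ->
  exists p q s, [/\ connect (rv v) n1 (l p), connect (rv v) n2 (l q),
    connect (rv v) n3 (l s) & [/\ [set p; q] \in TT, [set p; s] \in TT & [set q; s] \in TT]].
Proof.
case=> [[av bv cv] [ab ac bc] [tab tac tbc]].
have tri : forall y, l y != v -> [\/ connect (rv v) n1 (l y), connect (rv v) n2 (l y)
    | connect (rv v) n3 (l y)].
  move=> y yv; have [n vn Hn] := side_of yv.
  by case: (Hnb vn) => En; subst n; [constructor 3|constructor 1|constructor 2].
have same : forall n y z, connect (rv v) n (l y) -> connect (rv v) n (l z) ->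
    connect (rv v) (l y) (l z).
  by move=> n y z Hy Hz; rewrite rv_sym in Hy; exact: connect_trans Hy Hz.
have tba : [set b; a] \in TT by rewrite setUC.
have tca : [set c; a] \in TT by rewrite setUC.
have tcb : [set c; b] \in TT by rewrite setUC.
case: (tri a av) => Ha; case: (tri b bv) => Hb; case: (tri c cv) => Hc;
  first [ by move: ab; rewrite (same _ _ _ Ha Hb)
        | by move: ac; rewrite (same _ _ _ Ha Hc)
        | by move: bc; rewrite (same _ _ _ Hb Hc)
        | solve [exists a, b, c; do !split => //]
        | solve [exists a, c, b; do !split => //]
        | solve [exists b, a, c; do !split => //]
        | solve [exists b, c, a; do !split => //]
        | solve [exists c, a, b; do !split => //]
        | solve [exists c, b, a; do !split => //] ].
Qed.

Lemma EE_step' (TT : {set {set X}}) : pair_set TT ->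
  (exists a b c, supports e l TT a b c v) -> #|EE A' TT| + 2 <= #|EE A TT|.
Proof.
move=> HT [a [b [c /arrange [p [q [s [Hp Hq Hs [pq ps qs]]]]]]]].
apply: (EE_step HT _ _ Hs pq ps qs).
  by rewrite inE; exact: side_transfer vA nsA1 _ Hp.
by rewrite inE; exact: side_transfer vA nsA2 _ Hq.
Qed.

End Step.

Lemma vac (w nn : V) : forall u, u \in [set w] -> u != w -> ~~ connect (rv w) nn u.
Proof. by move=> u; rewrite inE => /eqP->; rewrite eqxx. Qed.

Lemma PP_count k : forall A : {set V}, #|A| = k.+1 -> Aconn A -> A \subset Int ->
  #|PP A| = #|A| + 2.
Proof.
elim: k => [|k IH] A cA HA AI.
  have /cards1P [w Aw] : #|A| == 1 by rewrite cA.
  subst A; have wA : w \in [set w] by rewrite inE.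
  have wI : w \in Int by apply: (subsetP AI).
  have : 0 < #|nbrs w| by rewrite (Int_deg3 wI).
  case/card_gt0P => n; rewrite inE => wn.
  have [m1 [m2 [m12 m1n m2n wm1 [wm2 Hnb]]]] := three_nb wI wn.
  have [x Hx] := leafside_A wA wn (@vac w n).
  have [x1 Hx1] := leafside_A wA wm1 (@vac w m1).
  have [x2 Hx2] := leafside_A wA wm2 (@vac w m2).
  have -> : PP [set w] = [set Kset [set w] n; Kset [set w] m1; Kset [set w] m2].
    apply/eqP; rewrite eqEsubset; apply/andP; split.
      apply/subsetP => B /imsetP [y _ ->].
      have [nn wnn Hnn] := side_of (Int_neq y wI).
      have := side_transfer wA (@vac w nn) Hnn => /blk_K ->.
      by case: (Hnb _ wnn) => ->; rewrite !inE eqxx ?orbT.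
    apply/subsetP => B; rewrite !inE => /orP[/orP[]|]/eqP->; apply/imsetP.
    - by exists x => //; rewrite (blk_K Hx).
    - by exists x1 => //; rewrite (blk_K Hx1).
    - by exists x2 => //; rewrite (blk_K Hx2).
  have nm1 : n != m1 by rewrite eq_sym.
  have nm2 : n != m2 by rewrite eq_sym.
  have Kx : x \in Kset [set w] n by rewrite inE.
  have Kx1 : x1 \in Kset [set w] m1 by rewrite inE.
  rewrite card3 ?cA //.
  - exact: (Kdist wA wn wm1 nm1 Kx).
  - exact: (Kdist wA wn wm2 nm2 Kx).
  - exact: (Kdist wA wm1 wm2 m12 Kx1).
have /Aleaf : 1 < #|A| by rewrite cA.
case/(_ HA) => v [n3 [vA n3A vn3 Hv]].
have vI : v \in Int by apply: (subsetP AI).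
have [m1 [m2 [m12 m1n m2n vm1 [vm2 Hnb]]]] := three_nb vI vn3.
rewrite (PP_step HA AI vA n3A vn3 Hv m12 m1n m2n vm1 vm2 Hnb).
have cA' : #|A :\ v| = k.+1 by move: cA; rewrite (cardsD1 v) vA add1n => [[]].
rewrite (IH _ cA' (Aconn_del HA vA Hv) (subset_trans (subsetDl _ _) AI)).
by rewrite cA' cA !addn2 addn1.
Qed.

Lemma EE_count (TT : {set {set X}}) : pair_set TT ->
  (forall v, v \in Int -> exists a b c, supports e l TT a b c v) ->
  forall k (A : {set V}), #|A| = k.+1 -> Aconn A -> A \subset Int ->
  2 * #|A| + 1 <= #|EE A TT|.
Proof.
move=> HT cov; elim=> [|k IH] A cA HA AI.
  have /cards1P [w Aw] : #|A| == 1 by rewrite cA.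
  subst A; have wA : w \in [set w] by rewrite inE.
  have wI : w \in Int by apply: (subsetP AI).
  have [a [b [c [[av bv cv] [nab nac nbc] [tab tac tbc]]]]] := cov w wI.
  have dab := blk_dist wA nab.
  have dac := blk_dist wA nac.
  have dbc := blk_dist wA nbc.
  have inEE : forall a b, [set a; b] \in TT -> blk [set w] a != blk [set w] b ->
      [set blk [set w] a; blk [set w] b] \in EE [set w] TT.
    move=> a' b' ab nab'; apply/imsetP; exists [set a'; b']; last by rewrite qe2.
    by rewrite inE ab qe2 cards2 nab'.
  set Ba := blk [set w] a; set Bb := blk [set w] b; set Bc := blk [set w] c.
  have sub : [set [set Ba; Bb]; [set Ba; Bc]; [set Bb; Bc]] \subset EE [set w] TT.
    by apply/subsetP => Q; rewrite !inE => /orP[/orP[]|]/eqP->; apply: inEE.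
  have := subset_leq_card sub; rewrite card3 ?cA //.
  - apply/eqP => E; have : Bc \in [set Ba; Bc] by rewrite !inE eqxx orbT.
    by rewrite -E !inE eq_sym (negbTE dac) eq_sym (negbTE dbc).
  - apply/eqP => E; have : Ba \in [set Ba; Bb] by rewrite !inE eqxx.
    by rewrite E !inE (negbTE dab) (negbTE dac).
  - apply/eqP => E; have : Ba \in [set Ba; Bc] by rewrite !inE eqxx.
    by rewrite E !inE (negbTE dab) (negbTE dac).
have /Aleaf : 1 < #|A| by rewrite cA.
case/(_ HA) => v [n3 [vA n3A vn3 Hv]].
have vI : v \in Int by apply: (subsetP AI).
have [m1 [m2 [m12 m1n m2n vm1 [vm2 Hnb]]]] := three_nb vI vn3.
have H := EE_step' HA AI vA n3A vn3 Hv m12 m1n m2n vm1 vm2 Hnb HT (cov v vI).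
have cA' : #|A :\ v| = k.+1 by move: cA; rewrite (cardsD1 v) vA add1n => [[]].
have := IH _ cA' (Aconn_del HA vA Hv) (subset_trans (subsetDl _ _) AI).
rewrite cA' cA => H2; apply: leq_trans H.
by move: H2; clear; lia.
Qed.

Lemma Int_card : #|X| = #|Int| + 2.
Proof.
have [w wI] := exists_int.
have c : #|Int| = (#|Int|.-1).+1 by rewrite prednK //; apply/card_gt0P; exists w.
have := PP_count c Int_conn (subxx _).
have -> : PP Int = [set [set x] | x : X].
  by apply: eq_imset => x; exact: blk_Int.
by rewrite card_imset //; exact: set1_inj.
Qed.

Lemma lower (TT : {set {set X}}) : triplet_cover e l TT -> 2 * #|X| - 3 <= #|TT|.
Proof.
case=> HT cov.
have cov' : forall v, v \in Int -> exists a b c, supports e l TT a b c v.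
  by move=> v; rewrite IntP => /forallP H; apply: cov.
have [w wI] := exists_int.
have c : #|Int| = (#|Int|.-1).+1 by rewrite prednK //; apply/card_gt0P; exists w.
have := EE_count HT cov' c Int_conn (subxx _).
have qeI : forall S, qe Int S = [set [set x] | x in S].
  by move=> S; apply: eq_imset => x; exact: blk_Int.
have -> : EE Int TT = [set [set [set x] | x in (S : {set X})] | S in TT].
  apply/setP => Q; apply/imsetP/imsetP => [[S]|[S ST ->]].
    by rewrite inE => /andP[ST _] ->; exists S; rewrite // qeI.
  exists S; last by rewrite qeI.
  by rewrite inE ST qeI card_imset ?(HT _ ST) //; exact: set1_inj.
rewrite card_imset; last by apply: imset_inj; exact: set1_inj.
have := Int_card; move: (#|Int|) (#|X|) (#|TT|) => a b d; clear; lia.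
Qed.

Lemma chain v n n' a b : connect (rv v) n (l a) -> connect (rv v) n' (l b) ->
  connect (rv v) (l a) (l b) -> connect (rv v) n n'.
Proof.
move=> Ha Hb Hab; rewrite rv_sym in Hb.
exact: connect_trans (connect_trans Ha Hab) Hb.
Qed.

Lemma upper : exists TT : {set {set X}}, triplet_cover e l TT /\ #|TT| <= 2 * #|X| - 3.
Proof.
have [r _] : exists r : X, r \in X by apply/card_gt0P; apply: leq_trans hX.
pose cond v (ab : X * X) := [&& ~~ connect (rv v) (l ab.1) (l ab.2),
   ~~ connect (rv v) (l ab.1) (l r) & ~~ connect (rv v) (l ab.2) (l r)].
have ex : forall v, v \in Int -> exists ab, cond v ab.
  move=> v vI; have [nr vnr Hr] := side_of (Int_neq r vI).
  have [m1 [m2 [m12 m1r m2r vm1 [vm2 _]]]] := three_nb vI vnr.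
  have [a Ha] := leaf_in_side vm1.
  have [b Hb] := leaf_in_side vm2.
  exists (a, b); rewrite /cond /=; apply/and3P; split; apply/negP => H.
  - by have := sides_disj vm1 vm2 m12; rewrite (chain Ha Hb H).
  - by have := sides_disj vm1 vnr m1r; rewrite (chain Ha Hr H).
  - by have := sides_disj vm2 vnr m2r; rewrite (chain Hb Hr H).
pose gp v := if [pick ab | cond v ab] is Some ab then [set ab.1; ab.2] else set0.
have gpP : forall v, v \in Int -> exists ab, cond v ab /\ gp v = [set ab.1; ab.2].
  move=> v vI; rewrite /gp; case: pickP => [ab Hab|H]; first by exists ab.
  by have [ab Hab] := ex v vI; move: (H ab); rewrite Hab.
pose TT0 := [set [set x; r] | x in [set~ r]] :|: [set gp v | v in Int].
have neq_r : forall v y, ~~ connect (rv v) (l y) (l r) -> y \in [set~ r].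
  move=> v y H; rewrite !inE; apply/negP => /eqP E; by move: H; rewrite E connect0.
exists TT0; split; last first.
  apply: leq_trans (leq_card_setU _ _).1 _.
  have H1 := leq_imset_card (fun x => [set x; r]) [set~ r].
  have H2 := leq_imset_card gp Int.
  rewrite cardsC1 in H1.
  have := Int_card; move: H1 H2.
  move: (#|[set [set x; r] | x in [set~ r]]|) (#|[set gp v | v in Int]|) (#|Int|) (#|X|).
  by clear => a b c d; lia.
split.
  move=> S; rewrite inE => /orP[/imsetP [x]|/imsetP [v vI ->]].
    by rewrite !inE => xr ->; rewrite cards2 xr.
  have [[a b] [/and3P[Hab _ _] ->]] := gpP v vI; rewrite cards2 /=.
  by case: (eqVneq a b) Hab => // ->; rewrite connect0.
move=> v Hv; have vI : v \in Int by rewrite IntP; apply/forallP.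
have [[a b] [/and3P[Hab Har Hbr] Eg]] := gpP v vI; rewrite /= in Hab Har Hbr Eg.
exists a, b, r; split; split; rewrite ?Int_neq //.
- by rewrite inE -Eg; apply/orP; right; apply/imsetP; exists v.
- by rewrite inE; apply/orP; left; apply/imsetP; exists a; rewrite // (neq_r _ _ Har).
- by rewrite inE; apply/orP; left; apply/imsetP; exists b; rewrite // (neq_r _ _ Hbr).
Qed.

Lemma main_result :
  (forall TT : {set {set X}}, triplet_cover e l TT -> 2 * #|X| - 3 <= #|TT|) /\
  (exists TT : {set {set X}}, triplet_cover e l TT /\ #|TT| = 2 * #|X| - 3).
Proof.
split; first exact: lower.
have [TT [HT Hc]] := upper.
exists TT; split => //; apply/eqP; rewrite eqn_leq Hc.
exact: lower.
Qed.

End Tree.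

Theorem proposition3 (X V : finType) (e : rel V) (l : X -> V) :
  3 <= #|X| -> binary_phylo e l ->
  (forall TT : {set {set X}}, triplet_cover e l TT -> 2 * #|X| - 3 <= #|TT|) /\
  (exists TT : {set {set X}}, triplet_cover e l TT /\ #|TT| = 2 * #|X| - 3).
Proof.
move=> hX [[[esym eirr] [econn eacyc]] linj hdeg1 hdeg3].
exact: main_result esym eirr econn eacyc linj hdeg1 hdeg3 hX.
Qed.
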